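(* There is an absolute constant $C_1>0$ such that the following holds. Let $n\ge 2$, $p\ge 1$, $d\ge 1$, let $(x_1,y_1),\ldots,(x_n,y_n)\in \mathbb{S}^{d-1}\times\{-1,1\}$ be any dataset and let $\theta^{(1)}$ be any initial parameter vector. Set $h=1/p$, $L_1:=L(\theta^{(1)})$, and \[ \widetilde{Q}_1=\min\left\{\frac{1}{30pL_1\log^2(1/L_1)},\ \frac{108\,\lVert V^{(1)}\rVert^2}{125\,L_1\log^4(1/L_1)},\ \frac{e^2}{120p}\right\},\qquad \widetilde{Q}_2(Q_1)=\frac{125\,Q_1L_1\log^4(1/L_1)}{216\,\lVert V^{(1)}\rVert^2}. \] Let $Q_1$ be any positive number with $Q_1\le \widetilde{Q}_1$ and $Q_2$ any positive number with $Q_2\le\widetilde{Q}_2(Q_1)$. Let $\theta^{(t+1)}=\theta^{(t)}-\alpha_t\nabla_\theta L(\theta^{(t)})$ for $t\ge 1$ with step-sizes $\alpha_t=Q_1\log^2(1/L(\theta^{(t)}))$. If $L(\theta^{(1)})\le \frac{1}{n^{1+C_1}}$, then for all $t\ge 1$, \[ L(\theta^{(t)})\le \frac{L(\theta^{(1)})}{Q_2\,(t-1)+1}. \]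
   Context: $\mathbb{S}^{d-1}$ is the set of unit vectors in $\mathbb{R}^d$; $\log$ is the natural logarithm. The Huberized ReLU with bandwidth $h>0$ is $\phi(z)=0$ for $z<0$, $\phi(z)=z^2/(2h)$ for $z\in[0,h]$, $\phi(z)=z-h/2$ for $z>h$. The network has $2p$ hidden units with input weights $v_i\in\mathbb{R}^d$ and biases $b_i\in\mathbb{R}$, $i\in[2p]$; the output weights are fixed (not trained): $u_1=\cdots=u_p=1$, $u_{p+1}=\cdots=u_{2p}=-1$. The trainable parameters are $\theta=(v_1,b_1,\ldots,v_{2p},b_{2p})$ and the network computes $f_\theta(x)=\sum_{i=1}^{2p}u_i\phi(v_i\cdot x+b_i)$. The training loss is $L(\theta)=\frac1n\sum_{s=1}^n\ln(1+\exp(-y_sf_\theta(x_s)))$. $V^{(1)}$ denotes the $2p\times(d+1)$ matrix whose $i$-th row is $(v_i^{(1)},b_i^{(1)})$ formed from the parameters $\theta^{(1)}$, and $\lVert V^{(1)}\rVert$ is its Frobenius norm. *)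

(* Defs.v *)
From Stdlib Require Import Reals Lra Lia.
From Coquelicot Require Import Coquelicot.
Open Scope R_scope.

Fixpoint fsum (n : nat) (f : nat -> R) : R :=
  match n with
  | O => 0
  | S m => fsum m f + f m
  end.

Definition huber_relu (h z : R) : R :=
  if Rlt_dec z 0 then 0
  else if Rle_dec z h then z ^ 2 / (2 * h)
  else z - h / 2.

(* Parameters theta = (v_i, b_i)_{i < 2p}: v i j is the j-th coordinate of v_i
   (only i < 2p, j < d matter). *)
Record params := mkParams { pv : nat -> nat -> R ; pb : nat -> R }.

Definition out_weight (p i : nat) : R := if Nat.ltb i p then 1 else -1.

Definition network (p d : nat) (th : params) (x : nat -> R) : R :=
  fsum (2 * p) (fun i =>
    out_weight p i *
    huber_relu (/ INR p) (fsum d (fun j => pv th i j * x j) + pb th i)).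

Definition loss (n p d : nat) (X : nat -> nat -> R) (Y : nat -> R)
  (th : params) : R :=
  / INR n * fsum n (fun s => ln (1 + exp (- (Y s * network p d th (X s))))).

Definition set_v (th : params) (i j : nat) (z : R) : params :=
  mkParams (fun i' j' => if andb (Nat.eqb i' i) (Nat.eqb j' j) then z else pv th i' j')
           (pb th).
Definition set_b (th : params) (i : nat) (z : R) : params :=
  mkParams (pv th) (fun i' => if Nat.eqb i' i then z else pb th i').

Definition grad_v (F : params -> R) (th : params) (i j : nat) : R :=
  Derive (fun z => F (set_v th i j z)) (pv th i j).
Definition grad_b (F : params -> R) (th : params) (i : nat) : R :=
  Derive (fun z => F (set_b th i z)) (pb th i).

(* squared Frobenius norm of the 2p x (d+1) matrix with rows (v_i, b_i) *)
Definition frob_sq (p d : nat) (th : params) : R :=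
  fsum (2 * p) (fun i => fsum d (fun j => pv th i j ^ 2) + pb th i ^ 2).

(* Main.v *)
Require Import Defs.
From Stdlib Require Import Reals Lra Lia Psatz.
From Coquelicot Require Import Coquelicot.
Open Scope R_scope.

Lemma fsum_ext N f g : (forall k, (k < N)%nat -> f k = g k) -> fsum N f = fsum N g.
Proof. induction N; simpl; intros H; auto. rewrite IHN by (intros; apply H; lia). rewrite H by lia. auto. Qed.

Lemma fsum_plus N f g : fsum N (fun k => f k + g k) = fsum N f + fsum N g.
Proof. induction N; simpl; [lra|rewrite IHN; lra]. Qed.

Lemma fsum_minus N f g : fsum N (fun k => f k - g k) = fsum N f - fsum N g.
Proof. induction N; simpl; [lra|rewrite IHN; lra]. Qed.

Lemma fsum_scal N c f : fsum N (fun k => c * f k) = c * fsum N f.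
Proof. induction N; simpl; [lra|rewrite IHN; lra]. Qed.

Lemma fsum_scalr N c f : fsum N (fun k => f k * c) = fsum N f * c.
Proof. induction N; simpl; [lra|rewrite IHN; lra]. Qed.

Lemma fsum_const N c : fsum N (fun _ => c) = INR N * c.
Proof. induction N; cbn [fsum]; [simpl; lra|rewrite IHN]. rewrite S_INR; lra. Qed.

Lemma fsum_le N f g : (forall k, (k < N)%nat -> f k <= g k) -> fsum N f <= fsum N g.
Proof. induction N; simpl; intros H; [lra|]. assert (fsum N f <= fsum N g) by (apply IHN; intros; apply H; lia).
 assert (f N <= g N) by (apply H; lia). lra. Qed.

Lemma fsum_nonneg N f : (forall k, (k < N)%nat -> 0 <= f k) -> 0 <= fsum N f.
Proof. intros H. replace 0 with (fsum N (fun _ => 0)). apply fsum_le; auto.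
 rewrite fsum_const; lra. Qed.

Lemma fsum_zero N f : (forall k, (k < N)%nat -> f k = 0) -> fsum N f = 0.
Proof. intros H. rewrite (fsum_ext N f (fun _ => 0)) by auto. rewrite fsum_const; lra. Qed.

Lemma fsum_single N m c : (m < N)%nat ->
  fsum N (fun k => if Nat.eqb k m then c else 0) = c.
Proof. induction N; intros Hm; [lia|simpl].
 destruct (Nat.eq_dec m N) as [->|Hne].
 - rewrite Nat.eqb_refl. rewrite fsum_zero; [lra|]. intros k Hk.
   destruct (Nat.eqb_spec k N); [lia|auto].
 - rewrite IHN by lia. destruct (Nat.eqb_spec N m); [lia|lra]. Qed.

Lemma fsum_swap N M (f : nat -> nat -> R) :
  fsum N (fun i => fsum M (fun j => f i j)) = fsum M (fun j => fsum N (fun i => f i j)).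
Proof. induction N; simpl.
 - rewrite fsum_zero; auto.
 - rewrite IHN. rewrite <- fsum_plus. auto. Qed.

Lemma fsum_elem_le N f m : (forall k, (k < N)%nat -> 0 <= f k) -> (m < N)%nat -> f m <= fsum N f.
Proof. induction N; intros H Hm; [lia|simpl].
 assert (0 <= fsum N f) by (apply fsum_nonneg; intros; apply H; lia).
 assert (0 <= f N) by (apply H; lia).
 destruct (Nat.eq_dec m N) as [->|]; [lra|]. assert (f m <= fsum N f) by (apply IHN; [intros; apply H; lia| lia]). lra. Qed.

Lemma quad_cs A B C : 0 <= B -> (forall t, 0 <= A - 2 * t * C + t * t * B) -> C * C <= A * B.
Proof. intros HB H. destruct (Req_dec B 0) as [E|E].
 - subst. destruct (Req_dec C 0) as [->|HC]; [nra|].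
   specialize (H ((A + 1) / (2 * C))).
   replace (A - 2 * ((A + 1) / (2 * C)) * C + (A + 1) / (2 * C) * ((A + 1) / (2 * C)) * 0) with (-1) in H by (field; auto). lra.
 - specialize (H (C / B)). assert (0 < B) by lra.
   assert (0 <= A * B - C * C); [|lra].
   replace (A * B - C * C) with (B * (A - 2 * (C / B) * C + C / B * (C / B) * B)) by (field; auto).
   apply Rmult_le_pos; lra. Qed.

Lemma fsum_cs N a b : fsum N (fun k => a k * b k) * fsum N (fun k => a k * b k) <= fsum N (fun k => a k * a k) * fsum N (fun k => b k * b k).
Proof. apply quad_cs.
 - apply fsum_nonneg; intros; nra.
 - intros t. assert (H : 0 <= fsum N (fun k => (a k - t * b k) * (a k - t * b k))) by (apply fsum_nonneg; intros k _; apply Rle_0_sqr).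
   replace (fsum N (fun k => (a k - t * b k) * (a k - t * b k))) with
     (fsum N (fun k => a k * a k) - 2 * t * fsum N (fun k => a k * b k) + t * t * fsum N (fun k => b k * b k)) in H.
   + lra.
   + rewrite <- !fsum_scal, <- fsum_minus, <- fsum_plus. apply fsum_ext; intros; ring. Qed.

Definition hder (h z : R) : R :=
  if Rlt_dec z 0 then 0 else if Rle_dec z h then z / h else 1.

Lemma huber_rem h a b : 0 < h ->
  0 <= huber_relu h b - huber_relu h a - hder h a * (b - a) <= (b - a) * (b - a) / (2 * h).
Proof. intros Hh. unfold huber_relu, hder.
 destruct (Rlt_dec a 0); destruct (Rlt_dec b 0); try destruct (Rle_dec a h); try destruct (Rle_dec b h);
 split; apply (Rmult_le_reg_r (2*h)); try lra; field_simplify; try lra;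
 try nra; pose proof (Rle_0_sqr (b - a)); unfold Rsqr in *; nra. Qed.

Lemma hder_bounds h a : 0 < h -> 0 <= hder h a <= 1.
Proof. intros Hh; unfold hder. destruct (Rlt_dec a 0); [lra|]. destruct (Rle_dec a h); [|lra].
 split; [apply Rmult_le_pos; [lra| left; apply Rinv_0_lt_compat; lra]|].
 apply (Rmult_le_reg_r h); [lra|]. field_simplify; lra. Qed.

Lemma hder_lin h a : 0 < h -> 0 <= hder h a * a - huber_relu h a <= h / 2.
Proof. intros Hh; unfold hder, huber_relu. destruct (Rlt_dec a 0); [lra|]. destruct (Rle_dec a h); [|lra].
 split; apply (Rmult_le_reg_r (2*h)); try lra; field_simplify; try lra; nra. Qed.

Lemma quad_derive f a D K : (forall b, Rabs (f b - f a - D * (b - a)) <= K * ((b - a) * (b - a))) -> is_derive f a D.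
Proof. intros H. apply is_derive_Reals. intros eps Heps.
 assert (HK : 0 <= K). { specialize (H (a + 1)). replace ((a+1-a)*(a+1-a)) with 1 in H by ring.
   pose proof (Rabs_pos (f (a + 1) - f a - D * (a + 1 - a))). lra. }
 exists (mkposreal (eps / (K + 1)) ltac:(apply Rdiv_lt_0_compat; lra)). simpl. intros hh Hh Hlt.
 specialize (H (a + hh)). replace (a + hh - a) with hh in H by ring.
 replace ((f (a + hh) - f a) / hh - D) with ((f (a + hh) - f a - D * hh) / hh) by (field; auto).
 rewrite Rabs_div by auto.
 apply (Rmult_lt_reg_r (Rabs hh)); [apply Rabs_pos_lt; auto|]. field_simplify; [|apply Rabs_no_R0; auto].
 assert (hh * hh = Rabs hh * Rabs hh) by (rewrite <- Rabs_mult; rewrite Rabs_right; nra).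
 assert (Rabs hh * (K + 1) < eps) by (apply (Rmult_lt_reg_r (/ (K+1))); [apply Rinv_0_lt_compat; lra|]; field_simplify; lra).
 assert (0 < Rabs hh) by (apply Rabs_pos_lt; auto).
 nra. Qed.

Lemma huber_derive h a : 0 < h -> is_derive (huber_relu h) a (hder h a).
Proof. intros Hh. apply (quad_derive _ _ _ (/ (2 * h))). intros b.
 destruct (huber_rem h a b Hh). rewrite Rabs_right by lra.
 replace (/ (2 * h) * ((b - a) * (b - a))) with ((b - a) * (b - a) / (2 * h)) by (field; lra). lra. Qed.

Lemma dg y w : is_derive (fun w => ln (1 + exp (- (y * w)))) w (- y * / (1 + exp (y * w))).
Proof. auto_derive.
 - pose proof (exp_pos (- (y * w))); lra.
 - rewrite exp_Ropp. pose proof (exp_pos (y * w)). field. lra. Qed.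

Lemma is_derive_fsum N (f : nat -> R -> R) x df :
  (forall k, (k < N)%nat -> is_derive (f k) x (df k)) ->
  is_derive (fun z => fsum N (fun k => f k z)) x (fsum N df).
Proof. induction N; intros H; simpl.
 - auto_derive; auto.
 - apply (is_derive_plus (fun z => fsum N (fun k => f k z)) (f N)).
   + apply IHN; intros; apply H; lia.
   + apply H; lia. Qed.

Definition act (d : nat) (th : params) (x : nat -> R) (i : nat) : R :=
  fsum d (fun j => pv th i j * x j) + pb th i.

Lemma derive_network p d (thz : R -> params) z0 x dact : (1 <= p)%nat ->
  (forall i, (i < 2*p)%nat -> is_derive (fun z => act d (thz z) x i) z0 (dact i)) ->
  is_derive (fun z => network p d (thz z) x) z0
    (fsum (2*p) (fun i => out_weight p i * (hder (/ INR p) (act d (thz z0) x i) * dact i))).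
Proof. intros Hp H. unfold network.
 apply (is_derive_fsum (2*p) (fun i z => out_weight p i * huber_relu (/ INR p) (act d (thz z) x i))).
 intros k Hk. apply (is_derive_scal (fun z => huber_relu (/ INR p) (act d (thz z) x k))).
 replace (hder (/ INR p) (act d (thz z0) x k) * dact k) with (scal (dact k) (hder (/ INR p) (act d (thz z0) x k)))
   by (unfold scal; simpl; unfold mult; simpl; ring).
 apply (is_derive_comp (huber_relu (/ INR p)) (fun z => act d (thz z) x k)).
 - apply huber_derive. apply Rinv_0_lt_compat. apply lt_0_INR. lia.
 - apply H; auto. Qed.

Lemma derive_loss n p d X Y (thz : R -> params) z0 dn :
  (forall s, (s < n)%nat -> is_derive (fun z => network p d (thz z) (X s)) z0 (dn s)) ->
  is_derive (fun z => loss n p d X Y (thz z)) z0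
    (/ INR n * fsum n (fun s => - Y s * / (1 + exp (Y s * network p d (thz z0) (X s))) * dn s)).
Proof. intros H. unfold loss.
 apply (is_derive_scal (fun z => fsum n (fun s => ln (1 + exp (- (Y s * network p d (thz z) (X s))))))).
 apply (is_derive_fsum n (fun s z => ln (1 + exp (- (Y s * network p d (thz z) (X s)))))).
 intros s Hs.
 replace (- Y s * / (1 + exp (Y s * network p d (thz z0) (X s))) * dn s) with
   (scal (dn s) (- Y s * / (1 + exp (Y s * network p d (thz z0) (X s)))))
   by (unfold scal; simpl; unfold mult; simpl; ring).
 apply (is_derive_comp (fun w => ln (1 + exp (- (Y s * w)))) (fun z => network p d (thz z) (X s))).
 - apply dg.
 - apply H; auto. Qed.

Definition Zc (d : nat) (X : nat -> nat -> R) (s j : nat) : R := if Nat.ltb j d then X s j else 1.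
Definition sig p d (X : nat -> nat -> R) (Y : nat -> R) th (s : nat) : R := / (1 + exp (Y s * network p d th (X s))).
Definition gW n p d X Y th i j : R :=
  - (/ INR n * fsum n (fun s => sig p d X Y th s * Y s * out_weight p i * hder (/ INR p) (act d th (X s) i) * Zc d X s j)).

Lemma fsum_opp N f : fsum N (fun k => - f k) = - fsum N f.
Proof. induction N; simpl; [lra|rewrite IHN; lra]. Qed.

Lemma act_set_v_same d th i j x i' : act d (set_v th i j (pv th i j)) x i' = act d th x i'.
Proof. unfold act, set_v; simpl. f_equal. apply fsum_ext. intros k _.
 destruct (Nat.eqb_spec i' i); destruct (Nat.eqb_spec k j); simpl; subst; auto. Qed.

Lemma act_set_b_same d th i x i' : act d (set_b th i (pb th i)) x i' = act d th x i'.
Proof. unfold act, set_b; simpl. destruct (Nat.eqb_spec i' i); subst; auto. Qed.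

Lemma network_ext p d th th' x : (forall i, act d th x i = act d th' x i) -> network p d th x = network p d th' x.
Proof. intros H. unfold network. apply fsum_ext. intros k _. fold (act d th x k). fold (act d th' x k). rewrite H; auto. Qed.

Lemma derive_act_v d th i j x i' z0 :
  is_derive (fun z => act d (set_v th i j z) x i') z0
    (fsum d (fun j' => (if andb (Nat.eqb i' i) (Nat.eqb j' j) then 1 else 0) * x j') + 0).
Proof. unfold act, set_v; simpl.
 apply (is_derive_plus (fun z => fsum d (fun j' => (if andb (Nat.eqb i' i) (Nat.eqb j' j) then z else pv th i' j') * x j')) (fun _ => pb th i')).
 - apply (is_derive_fsum d (fun j' z => (if andb (Nat.eqb i' i) (Nat.eqb j' j) then z else pv th i' j') * x j')).
   intros k _. destruct (andb _ _); auto_derive; auto; ring.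
 - auto_derive; auto. Qed.

Lemma derive_act_b d th i x i' z0 :
  is_derive (fun z => act d (set_b th i z) x i') z0
    (0 + if Nat.eqb i' i then 1 else 0).
Proof. unfold act, set_b; simpl.
 apply (is_derive_plus (fun z => fsum d (fun j' => pv th i' j' * x j')) (fun z => if Nat.eqb i' i then z else pb th i')).
 - auto_derive; auto.
 - destruct (Nat.eqb i' i); auto_derive; auto. Qed.

Lemma sum_unit_lemma p (c : nat -> R) i : (i < 2*p)%nat ->
  fsum (2*p) (fun i' => out_weight p i' * (c i' * (if Nat.eqb i' i then 1 else 0))) = out_weight p i * c i.
Proof. intros Hi. rewrite <- (fsum_single (2*p) i (out_weight p i * c i)) by auto.
 apply fsum_ext. intros k _. destruct (Nat.eqb_spec k i); subst; ring. Qed.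

Lemma grad_v_eq n p d X Y th i j : (1 <= p)%nat -> (i < 2*p)%nat -> (j < d)%nat ->
  grad_v (loss n p d X Y) th i j = gW n p d X Y th i j.
Proof. intros Hp Hi Hj. unfold grad_v. apply is_derive_unique.
 eapply is_derive_ext; [intros; reflexivity|].
 match goal with |- is_derive ?F _ _ => idtac end.
 evar (dn : nat -> R).
 assert (H := derive_loss n p d X Y (set_v th i j) (pv th i j) dn).
 match type of H with _ -> is_derive _ _ ?E => replace (gW n p d X Y th i j) with E end.
 - apply H. intros s Hs. unfold dn. apply derive_network; auto.
   intros i' _. apply derive_act_v.
 - unfold dn, gW. rewrite Ropp_mult_distr_r. f_equal. rewrite <- fsum_opp. apply fsum_ext. intros s Hs.
   rewrite (network_ext p d _ th) by (intros; apply act_set_v_same).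
   unfold sig.
   rewrite (fsum_ext (2*p) _ (fun i' => out_weight p i' * ((hder (/ INR p) (act d th (X s) i') * X s j) * (if Nat.eqb i' i then 1 else 0)))).
   + rewrite sum_unit_lemma by auto. unfold Zc. destruct (Nat.ltb_spec j d); [|lia]. ring.
   + intros i' _. rewrite act_set_v_same. rewrite Rplus_0_r.
     destruct (Nat.eqb_spec i' i).
     * simpl. rewrite (fsum_ext d _ (fun j' => if Nat.eqb j' j then X s j else 0)).
       -- rewrite fsum_single by auto. ring.
       -- intros k _. destruct (Nat.eqb_spec k j); subst; ring.
     * simpl. rewrite fsum_zero; [ring|]. intros; ring. Qed.

Lemma grad_b_eq n p d X Y th i : (1 <= p)%nat -> (i < 2*p)%nat ->
  grad_b (loss n p d X Y) th i = gW n p d X Y th i d.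
Proof. intros Hp Hi. unfold grad_b. apply is_derive_unique.
 evar (dn : nat -> R).
 assert (H := derive_loss n p d X Y (set_b th i) (pb th i) dn).
 match type of H with _ -> is_derive _ _ ?E => replace (gW n p d X Y th i d) with E end.
 - apply H. intros s Hs. unfold dn. apply derive_network; auto.
   intros i' _. apply derive_act_b.
 - unfold dn, gW. rewrite Ropp_mult_distr_r. f_equal. rewrite <- fsum_opp. apply fsum_ext.
   intros s Hs.
   rewrite (network_ext p d _ th) by (intros; apply act_set_b_same).
   unfold sig.
   rewrite (fsum_ext (2*p) _ (fun i' => out_weight p i' * ((hder (/ INR p) (act d th (X s) i')) * (if Nat.eqb i' i then 1 else 0)))).
   + rewrite sum_unit_lemma by auto. unfold Zc. rewrite Nat.ltb_irrefl. ring.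
   + intros i' _. rewrite act_set_b_same. rewrite Rplus_0_l. auto. Qed.

Lemma ln_le_sub1 y : 0 < y -> ln y <= y - 1.
Proof. intros Hy. pose proof (exp_ineq1_le (ln y)). rewrite exp_ln in H by auto. lra. Qed.

Lemma sig_le_ell m : / (1 + exp m) <= ln (1 + exp (- m)).
Proof. pose proof (exp_pos m) as Hm. rewrite exp_Ropp.
 assert (Hy : 0 < / (1 + / exp m)) by (apply Rinv_0_lt_compat; pose proof (Rinv_0_lt_compat _ Hm); lra).
 pose proof (ln_le_sub1 _ Hy). rewrite ln_Rinv in H by (pose proof (Rinv_0_lt_compat _ Hm); lra).
 assert (/ (1 + / exp m) - 1 = - / (1 + exp m)) by (field; lra). lra. Qed.

Lemma exp_quad x : x <= 1/5 -> exp x <= 1 + x + 5/4 * (x * x).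
Proof. intros Hx. pose proof (exp_ineq1_le (- x)) as H1.
 assert (Hex : exp x * exp (- x) = 1) by (rewrite <- exp_plus; replace (x + - x) with 0 by ring; apply exp_0).
 pose proof (exp_pos x). pose proof (exp_pos (-x)).
 assert (exp x * (1 - x) <= 1) by nra.
 assert (1 <= (1 - x) * (1 + x + 5/4 * (x * x))) by nra.
 nra. Qed.

Lemma ell_step m D : - (1/5) <= D ->
  ln (1 + exp (- (m + D))) <= ln (1 + exp (- m)) - / (1 + exp m) * D + 5/4 * / (1 + exp m) * (D * D).
Proof. intros HD. pose proof (exp_pos m) as Hm. pose proof (exp_pos (-m)) as Hu.
 replace (exp (- (m + D))) with (exp (- m) * exp (- D)) by (rewrite <- exp_plus; f_equal; ring).
 pose proof (exp_pos (- D)) as HeD.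
 assert (Hr : 0 < (1 + exp (- m) * exp (- D)) / (1 + exp (- m))) by (apply Rdiv_lt_0_compat; nra).
 pose proof (ln_le_sub1 _ Hr) as Hl.
 rewrite ln_div in Hl by nra.
 assert (Hq : exp (- D) <= 1 - D + 5/4 * (D * D)) by (replace (1 - D + 5/4 * (D*D)) with (1 + (-D) + 5/4 * ((-D)*(-D))) by ring; apply exp_quad; lra).
 assert (Hs : / (1 + exp m) = exp (- m) / (1 + exp (- m))) by (rewrite exp_Ropp; field; lra).
 assert (E : (1 + exp (- m) * exp (- D)) / (1 + exp (- m)) - 1 = / (1 + exp m) * (exp (- D) - 1))
   by (rewrite Hs; field; lra).
 assert (0 < / (1 + exp m)) by (apply Rinv_0_lt_compat; lra).
 assert (/ (1 + exp m) * (exp (- D) - 1) <= / (1 + exp m) * (- D + 5/4 * (D * D))) by (apply Rmult_le_compat_l; lra).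
 lra. Qed.

Definition dsum (N M : nat) (F : nat -> nat -> R) : R := fsum N (fun i => fsum M (fun j => F i j)).

Lemma dsum_ext N M F G : (forall i j, (i < N)%nat -> (j < M)%nat -> F i j = G i j) -> dsum N M F = dsum N M G.
Proof. intros H; unfold dsum; apply fsum_ext; intros; apply fsum_ext; intros; auto. Qed.
Lemma dsum_plus N M F G : dsum N M (fun i j => F i j + G i j) = dsum N M F + dsum N M G.
Proof. unfold dsum. rewrite <- fsum_plus. apply fsum_ext; intros; apply fsum_plus. Qed.
Lemma dsum_minus N M F G : dsum N M (fun i j => F i j - G i j) = dsum N M F - dsum N M G.
Proof. unfold dsum. rewrite <- fsum_minus. apply fsum_ext; intros; apply fsum_minus. Qed.
Lemma dsum_scal N M c F : dsum N M (fun i j => c * F i j) = c * dsum N M F.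
Proof. unfold dsum. rewrite <- fsum_scal. apply fsum_ext; intros; apply fsum_scal. Qed.
Lemma dsum_le N M F G : (forall i j, (i < N)%nat -> (j < M)%nat -> F i j <= G i j) -> dsum N M F <= dsum N M G.
Proof. intros H; unfold dsum; apply fsum_le; intros; apply fsum_le; intros; auto. Qed.
Lemma dsum_nonneg N M F : (forall i j, (i < N)%nat -> (j < M)%nat -> 0 <= F i j) -> 0 <= dsum N M F.
Proof. intros H; unfold dsum; apply fsum_nonneg; intros; apply fsum_nonneg; intros; auto. Qed.
Lemma dsum_cs N M a b : dsum N M (fun i j => a i j * b i j) * dsum N M (fun i j => a i j * b i j)
   <= dsum N M (fun i j => a i j * a i j) * dsum N M (fun i j => b i j * b i j).
Proof. apply quad_cs.
 - apply dsum_nonneg; intros i j _ _; apply Rle_0_sqr.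
 - intros t. assert (H : 0 <= dsum N M (fun i j => (a i j - t * b i j) * (a i j - t * b i j))) by (apply dsum_nonneg; intros i j _ _; apply Rle_0_sqr).
   replace (dsum N M (fun i j => (a i j - t * b i j) * (a i j - t * b i j))) with
     (dsum N M (fun i j => a i j * a i j) - 2 * t * dsum N M (fun i j => a i j * b i j) + t * t * dsum N M (fun i j => b i j * b i j)) in H.
   + lra.
   + rewrite <- !dsum_scal, <- dsum_minus, <- dsum_plus. apply dsum_ext; intros; ring. Qed.
Lemma fsum_dsum_swap n N M (F : nat -> nat -> nat -> R) :
  fsum n (fun s => dsum N M (F s)) = dsum N M (fun i j => fsum n (fun s => F s i j)).
Proof. unfold dsum. rewrite fsum_swap. apply fsum_ext; intros. apply fsum_swap. Qed.

Lemma fsum_S N f : fsum (S N) f = fsum N f + f N.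
Proof. reflexivity. Qed.

Definition Wc (d : nat) (th : params) (i j : nat) : R := if Nat.ltb j d then pv th i j else pb th i.

Lemma act_W d th X s i : act d th (X s) i = fsum (S d) (fun j => Wc d th i j * Zc d X s j).
Proof. unfold act. rewrite fsum_S. unfold Wc, Zc. rewrite Nat.ltb_irrefl. f_equal; [|ring].
 apply fsum_ext; intros k Hk. destruct (Nat.ltb_spec k d); [auto|lia]. Qed.

Lemma frob_W p d th : frob_sq p d th = dsum (2*p) (S d) (fun i j => Wc d th i j * Wc d th i j).
Proof. unfold frob_sq, dsum. apply fsum_ext; intros i _. rewrite fsum_S. unfold Wc. rewrite Nat.ltb_irrefl.
 simpl. f_equal; [|ring]. apply fsum_ext; intros k Hk. destruct (Nat.ltb_spec k d); [ring|lia]. Qed.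

Lemma Zc_sq d X s : fsum d (fun j => X s j ^ 2) = 1 -> fsum (S d) (fun j => Zc d X s j * Zc d X s j) = 2.
Proof. intros H. rewrite fsum_S. unfold Zc at 3 4. rewrite Nat.ltb_irrefl.
 rewrite (fsum_ext d _ (fun j => X s j ^ 2)). lra.
 intros k Hk. unfold Zc. destruct (Nat.ltb_spec k d); [ring|lia]. Qed.

Lemma out_weight_sq p i : out_weight p i * out_weight p i = 1.
Proof. unfold out_weight. destruct (Nat.ltb i p); ring. Qed.

Definition qq p d (X : nat -> nat -> R) (Y : nat -> R) th (s i j : nat) : R :=
  Y s * out_weight p i * hder (/ INR p) (act d th (X s) i) * Zc d X s j.
Definition G2 n p d X Y th : R := dsum (2*p) (S d) (fun i j => gW n p d X Y th i j * gW n p d X Y th i j).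
Definition Ssig n p d X Y th : R := / INR n * fsum n (sig p d X Y th).

Lemma Y_sq (Y : nat -> R) s : Y s = 1 \/ Y s = -1 -> Y s * Y s = 1.
Proof. intros [-> | ->]; ring. Qed.

Lemma sig_pos p d X Y th s : 0 < sig p d X Y th s.
Proof. unfold sig. apply Rinv_0_lt_compat. pose proof (exp_pos (Y s * network p d th (X s))). lra. Qed.

Lemma INR_p_pos p : (1 <= p)%nat -> 0 < INR p.
Proof. intros; apply lt_0_INR; lia. Qed.

Lemma G2_nonneg n p d X Y th : 0 <= G2 n p d X Y th.
Proof. unfold G2. apply dsum_nonneg; intros; apply Rle_0_sqr. Qed.

Lemma q_sq_sum p d X Y th s : (1 <= p)%nat -> (Y s = 1 \/ Y s = -1) -> fsum d (fun j => X s j ^ 2) = 1 ->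
  dsum (2*p) (S d) (fun i j => qq p d X Y th s i j * qq p d X Y th s i j) <= 4 * INR p.
Proof. intros Hp HY HX.
 apply Rle_trans with (dsum (2*p) (S d) (fun i j => Zc d X s j * Zc d X s j)).
 - apply dsum_le. intros i j _ _. unfold qq.
   pose proof (hder_bounds (/ INR p) (act d th (X s) i) ltac:(apply Rinv_0_lt_compat, INR_p_pos; auto)).
   pose proof (Y_sq Y s HY). pose proof (out_weight_sq p i).
   set (hh := hder (/ INR p) (act d th (X s) i)) in *.
   replace (Y s * out_weight p i * hh * Zc d X s j * (Y s * out_weight p i * hh * Zc d X s j))
     with ((Y s * Y s) * (out_weight p i * out_weight p i) * (hh * hh) * (Zc d X s j * Zc d X s j)) by ring.
   rewrite H0, H1. destruct H as [Hh1 Hh2]. assert (hh * hh <= 1) by nra.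
   pose proof (Rle_0_sqr (Zc d X s j)). unfold Rsqr in *.
   set (z := Zc d X s j * Zc d X s j) in *. clearbody hh z. nra.
 - unfold dsum. rewrite (fsum_ext (2*p) _ (fun _ => 2)) by (intros; apply Zc_sq; auto).
   rewrite fsum_const. rewrite mult_INR. simpl. lra. Qed.

Lemma Qbound n p d X Y th s : (1 <= p)%nat -> (Y s = 1 \/ Y s = -1) -> fsum d (fun j => X s j ^ 2) = 1 ->
  dsum (2*p) (S d) (fun i j => qq p d X Y th s i j * gW n p d X Y th i j) *
  dsum (2*p) (S d) (fun i j => qq p d X Y th s i j * gW n p d X Y th i j) <= 4 * INR p * G2 n p d X Y th.
Proof. intros. eapply Rle_trans; [apply dsum_cs|]. unfold G2. apply Rmult_le_compat_r.
 - apply dsum_nonneg; intros; apply Rle_0_sqr.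
 - apply q_sq_sum; auto. Qed.

Lemma gW_q n p d X Y th i j : (1 <= n)%nat ->
  fsum n (fun s => sig p d X Y th s * qq p d X Y th s i j) = - INR n * gW n p d X Y th i j.
Proof. intros Hn. unfold gW. assert (0 < INR n) by (apply lt_0_INR; lia).
 replace (fsum n (fun s => sig p d X Y th s * qq p d X Y th s i j)) with
   (fsum n (fun s => sig p d X Y th s * Y s * out_weight p i * hder (/ INR p) (act d th (X s) i) * Zc d X s j)).
 - field. lra.
 - apply fsum_ext; intros; unfold qq; ring. Qed.

Lemma sumsig_q n p d X Y th : (1 <= n)%nat ->
  fsum n (fun s => sig p d X Y th s * dsum (2*p) (S d) (fun i j => qq p d X Y th s i j * gW n p d X Y th i j))
  = - INR n * G2 n p d X Y th.
Proof. intros Hn.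
 rewrite (fsum_ext n _ (fun s => dsum (2*p) (S d) (fun i j => sig p d X Y th s * (qq p d X Y th s i j * gW n p d X Y th i j))))
   by (intros; rewrite dsum_scal; auto).
 rewrite fsum_dsum_swap. unfold G2. rewrite <- dsum_scal. apply dsum_ext. intros i j _ _.
 rewrite (fsum_ext n _ (fun s => (sig p d X Y th s * qq p d X Y th s i j) * gW n p d X Y th i j)) by (intros; ring).
 rewrite fsum_scalr. rewrite gW_q by auto. ring. Qed.

Lemma S_le_L n p d X Y th : (1 <= n)%nat -> Ssig n p d X Y th <= loss n p d X Y th.
Proof. intros Hn. unfold Ssig, loss. apply Rmult_le_compat_l.
 - left; apply Rinv_0_lt_compat, lt_0_INR; lia.
 - apply fsum_le; intros s _. unfold sig. apply sig_le_ell. Qed.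

Lemma S_nonneg n p d X Y th : 0 <= Ssig n p d X Y th.
Proof. unfold Ssig. destruct n. simpl; lra. apply Rmult_le_pos.
 - left; apply Rinv_0_lt_compat, lt_0_INR; lia.
 - apply fsum_nonneg; intros; left; apply sig_pos. Qed.

Lemma G2_bound n p d X Y th : (1 <= n)%nat -> (1 <= p)%nat ->
  (forall s, (s < n)%nat -> fsum d (fun j => X s j ^ 2) = 1) ->
  (forall s, (s < n)%nat -> Y s = 1 \/ Y s = -1) ->
  G2 n p d X Y th <= 4 * INR p * (Ssig n p d X Y th * Ssig n p d X Y th).
Proof. intros Hn Hp HX HY.
 set (c := fun s => dsum (2*p) (S d) (fun i j => qq p d X Y th s i j * gW n p d X Y th i j)).
 set (sg := sig p d X Y th).
 set (G := G2 n p d X Y th).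
 assert (HC : fsum n (fun s => sg s * c s) = - INR n * G) by (apply sumsig_q; auto).
 assert (Hcs : fsum n (fun s => sg s * c s) * fsum n (fun s => sg s * c s) <= fsum n (fun s => sg s * (c s * c s)) * fsum n sg).
 { apply quad_cs. apply fsum_nonneg; intros; left; apply sig_pos.
   intros t. assert (0 <= fsum n (fun s => sg s * ((c s - t) * (c s - t)))).
   { apply fsum_nonneg; intros. apply Rmult_le_pos; [left; apply sig_pos|apply Rle_0_sqr]. }
   replace (fsum n (fun s => sg s * ((c s - t) * (c s - t)))) with
    (fsum n (fun s => sg s * (c s * c s)) - 2 * t * fsum n (fun s => sg s * c s) + t * t * fsum n sg) in H; [lra|].
   rewrite <- !fsum_scal, <- fsum_minus, <- fsum_plus. apply fsum_ext; intros; ring. }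
 assert (Hcc : fsum n (fun s => sg s * (c s * c s)) <= fsum n (fun s => sg s * (4 * INR p * G))).
 { apply fsum_le; intros s Hs. apply Rmult_le_compat_l; [left; apply sig_pos|]. apply Qbound; auto. }
 rewrite (fsum_scalr n (4 * INR p * G) sg) in Hcc.
 assert (Hsg : 0 <= fsum n sg) by (apply fsum_nonneg; intros; left; apply sig_pos).
 assert (HG : 0 <= G) by apply G2_nonneg.
 assert (Hn' : 0 < INR n) by (apply lt_0_INR; lia).
 assert (Hp' : 0 < INR p) by (apply INR_p_pos; auto).
 rewrite HC in Hcs.
 assert (INR n * INR n * (G * G) <= 4 * INR p * G * (fsum n sg * fsum n sg)) by nra.
 unfold Ssig. fold sg.
 assert (E : fsum n sg = INR n * (/ INR n * fsum n sg)) by (field; lra).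
 set (S0 := / INR n * fsum n sg) in *. rewrite E in H.
 destruct (Req_dec G 0) as [->|HG0]; [nra|].
 assert (0 < G) by lra.
 assert (INR n * INR n * G * G <= INR n * INR n * G * (4 * INR p * (S0 * S0))) by nra.
 assert (0 < INR n * INR n * G) by (apply Rmult_lt_0_compat; nra).
 nra. Qed.

Definition marg p d (X : nat -> nat -> R) (Y : nat -> R) th s : R := Y s * network p d th (X s).

Lemma network_act p d th x : network p d th x = fsum (2*p) (fun i => out_weight p i * huber_relu (/ INR p) (act d th x i)).
Proof. reflexivity. Qed.

Lemma descent n p d X Y th th' al : (1 <= n)%nat -> (1 <= p)%nat ->
  (forall s, (s < n)%nat -> fsum d (fun j => X s j ^ 2) = 1) ->
  (forall s, (s < n)%nat -> Y s = 1 \/ Y s = -1) ->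
  (forall i j, (i < 2*p)%nat -> (j < S d)%nat -> Wc d th' i j = Wc d th i j - al * gW n p d X Y th i j) ->
  0 < al -> INR p * al * loss n p d X Y th <= 1/30 ->
  loss n p d X Y th' <= loss n p d X Y th - 3/4 * al * G2 n p d X Y th.
Proof. intros Hn Hp HX HY Hupd Hal Hsmall.
 set (L := loss n p d X Y th). set (G := G2 n p d X Y th). set (S0 := Ssig n p d X Y th).
 set (g := gW n p d X Y th).
 assert (Hn' : 0 < INR n) by (apply lt_0_INR; lia).
 assert (Hp' : 0 < INR p) by (apply INR_p_pos; auto).
 assert (Hh : 0 < / INR p) by (apply Rinv_0_lt_compat; auto).
 assert (HG : 0 <= G) by apply G2_nonneg.
 assert (HS : 0 <= S0) by apply S_nonneg.
 assert (HSL : S0 <= L) by (apply S_le_L; auto).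
 assert (HGb : G <= 4 * INR p * (S0 * S0)) by (apply G2_bound; auto).
 set (K := INR p * (al * al) * G).
 assert (HK0 : 0 <= K) by (unfold K; apply Rmult_le_pos; [apply Rmult_le_pos; [lra|apply Rle_0_sqr]|auto]).
 assert (HpaS : INR p * al * S0 <= 1/30).
 { apply Rle_trans with (INR p * al * L); auto. apply Rmult_le_compat_l; auto. apply Rmult_le_pos; lra. }
 assert (HpaS0 : 0 <= INR p * al * S0) by (apply Rmult_le_pos; [apply Rmult_le_pos|]; lra).
 assert (HKs : K <= 4 / 900).
 { unfold K. apply Rle_trans with (INR p * (al * al) * (4 * INR p * (S0 * S0))).
   - apply Rmult_le_compat_l; auto. apply Rmult_le_pos; [lra|apply Rle_0_sqr].
   - replace (INR p * (al * al) * (4 * INR p * (S0 * S0))) with (4 * ((INR p * al * S0) * (INR p * al * S0))) by ring.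
     nra. }
 set (Lin := fun s => - al * dsum (2*p) (S d) (fun i j => qq p d X Y th s i j * g i j)).
 set (Dl := fun s => marg p d X Y th' s - marg p d X Y th s).
 assert (Hsample : forall s, (s < n)%nat ->
   Lin s * Lin s <= 4 * K /\ - K <= Dl s - Lin s <= K).
 { intros s Hs.
   set (a := fun i => act d th (X s) i).
   set (dl := fun i => - al * fsum (S d) (fun j => g i j * Zc d X s j)).
   assert (Hact : forall i, (i < 2*p)%nat -> act d th' (X s) i = a i + dl i).
   { intros i Hi. unfold a, dl. rewrite !act_W.
     rewrite (fsum_ext (S d) (fun j => Wc d th' i j * Zc d X s j) (fun j => Wc d th i j * Zc d X s j + (- al) * (g i j * Zc d X s j))).
     - rewrite fsum_plus, fsum_scal. auto.
     - intros j Hj. rewrite Hupd by auto. unfold g. ring. }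
   assert (Hdl2 : forall i, dl i * dl i <= al * al * (2 * fsum (S d) (fun j => g i j * g i j))).
   { intros i. unfold dl. pose proof (fsum_cs (S d) (g i) (Zc d X s)) as Hc. rewrite Zc_sq in Hc by auto.
     replace (- al * fsum (S d) (fun j => g i j * Zc d X s j) * (- al * fsum (S d) (fun j => g i j * Zc d X s j)))
       with (al * al * (fsum (S d) (fun j => g i j * Zc d X s j) * fsum (S d) (fun j => g i j * Zc d X s j))) by ring.
     apply Rmult_le_compat_l; [apply Rle_0_sqr|]. lra. }
   assert (HLin : Lin s = Y s * fsum (2*p) (fun i => out_weight p i * (hder (/ INR p) (a i) * dl i))).
   { unfold Lin, dsum, dl, a. rewrite <- fsum_scal. rewrite <- fsum_scal. apply fsum_ext. intros i Hi.
     rewrite <- !fsum_scal. apply fsum_ext. intros j Hj. unfold qq. ring. }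
   set (R := fun i => huber_relu (/ INR p) (a i + dl i) - huber_relu (/ INR p) (a i) - hder (/ INR p) (a i) * dl i).
   assert (HDl : Dl s - Lin s = fsum (2*p) (fun i => Y s * out_weight p i * R i)).
   { unfold Dl, marg. rewrite HLin. rewrite !network_act.
     rewrite (fsum_ext (2*p) (fun i => out_weight p i * huber_relu (/ INR p) (act d th' (X s) i))
        (fun i => out_weight p i * huber_relu (/ INR p) (a i + dl i))) by (intros; rewrite Hact; auto).
     rewrite <- !fsum_scal. rewrite <- !fsum_minus. apply fsum_ext. intros i Hi. unfold R, a. ring. }
   assert (HR : forall i, 0 <= R i <= INR p * (al * al) * fsum (S d) (fun j => g i j * g i j)).
   { intros i. pose proof (huber_rem (/ INR p) (a i) (a i + dl i) Hh) as [H1 H2].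
     replace (a i + dl i - a i) with (dl i) in H1, H2 by ring. fold (R i) in H1, H2. split; auto.
     eapply Rle_trans; [apply H2|]. replace (dl i * dl i / (2 * / INR p)) with (INR p / 2 * (dl i * dl i)) by (field; lra).
     specialize (Hdl2 i). nra. }
   assert (HYu : forall i, Y s * out_weight p i = 1 \/ Y s * out_weight p i = -1).
   { intros i. unfold out_weight. destruct (HY s Hs) as [-> | ->]; destruct (Nat.ltb i p); [left|right|right|left]; ring. }
   assert (HsumR : fsum (2*p) R <= K).
   { unfold K, G, G2, dsum. rewrite <- fsum_scal. apply fsum_le. intros i Hi. apply HR. }
   split.
   - unfold Lin. replace (- al * dsum (2 * p) (S d) (fun i j => qq p d X Y th s i j * g i j) *
       (- al * dsum (2 * p) (S d) (fun i j => qq p d X Y th s i j * g i j))) with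
       (al * al * (dsum (2 * p) (S d) (fun i j => qq p d X Y th s i j * g i j) * dsum (2 * p) (S d) (fun i j => qq p d X Y th s i j * g i j))) by ring.
     unfold K. replace (4 * (INR p * (al * al) * G)) with (al * al * (4 * INR p * G)) by ring.
     apply Rmult_le_compat_l; [apply Rle_0_sqr|]. apply Qbound; auto.
   - rewrite HDl. split.
     + apply Rle_trans with (- fsum (2*p) R); [lra|]. rewrite <- fsum_opp. apply fsum_le. intros i _.
       destruct (HR i). destruct (HYu i) as [-> | ->]; lra.
     + apply Rle_trans with (fsum (2*p) R); auto. apply fsum_le. intros i _.
       destruct (HR i). destruct (HYu i) as [-> | ->]; lra. }
 set (cst := K + 5/4 * (44/10 * K + 11 * (K * K))).
 assert (Hper : forall s, (s < n)%nat ->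
   ln (1 + exp (- (Y s * network p d th' (X s)))) <=
   ln (1 + exp (- (Y s * network p d th (X s)))) - sig p d X Y th s * Lin s + sig p d X Y th s * cst).
 { intros s Hs. destruct (Hsample s Hs) as [H1 [H2 H3]].
   set (E := Dl s - Lin s) in *.
   assert (HD2 : Dl s * Dl s <= 44/10 * K + 11 * (K * K)).
   { replace (Dl s) with (Lin s + E) by (unfold E; ring).
     assert (E * E <= K * K) by nra.
     pose proof (Rle_0_sqr (Lin s / 10 - E)). unfold Rsqr in H0.
     nra. }
   assert (HD : - (1/5) <= Dl s) by nra.
   pose proof (ell_step (marg p d X Y th s) (Dl s) HD) as Hl.
   replace (marg p d X Y th s + Dl s) with (Y s * network p d th' (X s)) in Hl by (unfold Dl, marg; ring).
   fold (sig p d X Y th s) in Hl. unfold marg in Hl.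
   pose proof (sig_pos p d X Y th s).
   assert (sig p d X Y th s * (- E) <= sig p d X Y th s * K) by (apply Rmult_le_compat_l; lra).
   assert (sig p d X Y th s * (Dl s * Dl s) <= sig p d X Y th s * (44/10 * K + 11 * (K * K))) by (apply Rmult_le_compat_l; lra).
   unfold sig in *. unfold cst.
   replace (Dl s) with (Lin s + E) in Hl at 1 by (unfold E; ring).
   nra. }
 assert (Hsum : fsum n (fun s => ln (1 + exp (- (Y s * network p d th' (X s))))) <=
   fsum n (fun s => ln (1 + exp (- (Y s * network p d th (X s))))) - fsum n (fun s => sig p d X Y th s * Lin s)
   + fsum n (sig p d X Y th) * cst).
 { rewrite <- fsum_scalr, <- fsum_minus, <- fsum_plus. apply fsum_le. auto. }
 assert (HLs : fsum n (fun s => sig p d X Y th s * Lin s) = al * INR n * G).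
 { unfold Lin. rewrite (fsum_ext n _ (fun s => - al * (sig p d X Y th s * dsum (2 * p) (S d) (fun i j => qq p d X Y th s i j * g i j))))
     by (intros; ring).
   rewrite fsum_scal. unfold g. rewrite sumsig_q by auto. fold G. ring. }
 assert (HsS : fsum n (sig p d X Y th) = INR n * S0) by (unfold S0, Ssig; field; lra).
 rewrite HLs, HsS in Hsum.
 assert (Hloss : loss n p d X Y th' <= L - al * G + S0 * cst).
 { unfold loss. unfold L, loss.
   apply Rle_trans with (/ INR n * (fsum n (fun s => ln (1 + exp (- (Y s * network p d th (X s))))) - al * INR n * G + INR n * S0 * cst)).
   - apply Rmult_le_compat_l; [left; apply Rinv_0_lt_compat; lra|]. lra.
   - right. field. lra. }
 assert (HSK : S0 * K <= al * G / 30).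
 { unfold K. replace (S0 * (INR p * (al * al) * G)) with ((INR p * al * S0) * (al * G)) by ring.
   assert (0 <= al * G) by (apply Rmult_le_pos; lra). nra. }
 assert (HSK0 : 0 <= S0 * K) by (apply Rmult_le_pos; auto).
 assert (S0 * cst <= S0 * K * (65/10 + 1375/100 * (4/900))).
 { unfold cst. replace (S0 * (K + 5 / 4 * (44 / 10 * K + 11 * (K * K)))) with (S0 * K * (65/10 + 1375/100 * K)) by field.
   apply Rmult_le_compat_l; auto. lra. }
 assert (0 <= al * G) by (apply Rmult_le_pos; lra).
 lra.
Qed.

Definition Pq n p d X Y th : R := - dsum (2*p) (S d) (fun i j => gW n p d X Y th i j * Wc d th i j).

Lemma loss_pos n p d X Y th : (1 <= n)%nat -> 0 < loss n p d X Y th.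
Proof. intros Hn. unfold loss. apply Rmult_lt_0_compat. apply Rinv_0_lt_compat, lt_0_INR; lia.
 destruct n; [lia|]. rewrite fsum_S. assert (0 <= fsum n (fun s => ln (1 + exp (- (Y s * network p d th (X s)))))).
 { apply fsum_nonneg; intros. pose proof (sig_le_ell (Y k * network p d th (X k))).
   pose proof (Rinv_0_lt_compat (1 + exp (Y k * network p d th (X k))) ltac:(pose proof (exp_pos (Y k * network p d th (X k))); lra)). lra. }
 pose proof (sig_le_ell (Y n * network p d th (X n))).
 pose proof (Rinv_0_lt_compat (1 + exp (Y n * network p d th (X n))) ltac:(pose proof (exp_pos (Y n * network p d th (X n))); lra)). lra. Qed.

Lemma margin n p d X Y th : (1 <= n)%nat -> (1 <= p)%nat ->
  (forall s, (s < n)%nat -> Y s = 1 \/ Y s = -1) ->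
  INR n * loss n p d X Y th <= 1/40 ->
  ln (2 * INR n) + 1 <= 1/20 * (- ln (loss n p d X Y th)) ->
  19/20 * loss n p d X Y th <= Ssig n p d X Y th /\
  19/20 * (19/20) * (loss n p d X Y th * (- ln (loss n p d X Y th))) <= Pq n p d X Y th.
Proof. intros Hn Hp HY Hsm Hlog.
 set (L := loss n p d X Y th) in *.
 assert (Hn' : 0 < INR n) by (apply lt_0_INR; lia).
 assert (Hp' : 0 < INR p) by (apply INR_p_pos; auto).
 assert (HL : 0 < L) by (apply loss_pos; auto).
 assert (HlnL : 0 <= - ln L).
 { assert (0 < ln (2 * INR n) + 1); [|lra]. assert (1 <= 2 * INR n). { assert (1 <= INR n) by (apply (le_INR 1); lia). lra. }
   assert (0 <= ln (2 * INR n)); [|lra]. destruct H. left; rewrite <- ln_1; apply ln_increasing; lra. rewrite <- H, ln_1; lra. }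
 set (ell := fun s => ln (1 + exp (- (Y s * network p d th (X s))))).
 assert (Hsum : fsum n ell = INR n * L) by (unfold L, loss, ell; field; lra).
 assert (Hper : forall s, (s < n)%nat ->
   19/20 * ell s <= sig p d X Y th s /\ 19/20 * (- ln L) <= Y s * network p d th (X s) - 1).
 { intros s Hs. set (m := Y s * network p d th (X s)) in *.
   set (u := exp (- m)).
   assert (Hu : 0 < u) by apply exp_pos.
   assert (Hsig : sig p d X Y th s = u / (1 + u)) by (unfold sig, u; fold m; rewrite exp_Ropp; pose proof (exp_pos m); field; lra).
   assert (Hell : ell s = ln (1 + u)) by auto.
   assert (Hsl : sig p d X Y th s <= ell s) by (unfold sig, ell; apply sig_le_ell).
   assert (Hels : ell s <= INR n * L).
   { rewrite <- Hsum. apply fsum_elem_le; auto. intros k _. unfold ell.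
     pose proof (sig_le_ell (Y k * network p d th (X k))).
     pose proof (Rinv_0_lt_compat (1 + exp (Y k * network p d th (X k))) ltac:(pose proof (exp_pos (Y k * network p d th (X k))); lra)). lra. }
   assert (Hu1 : u <= 2 * (INR n * L)).
   { rewrite Hsig in Hsl. assert (u / (1 + u) <= INR n * L) by lra.
     assert (u <= INR n * L * (1 + u)). { apply (Rmult_le_compat_r (1 + u)) in H; [|lra]. replace (u / (1 + u) * (1 + u)) with u in H by (field; lra). lra. }
     nra. }
   assert (Hlu : ell s <= u) by (rewrite Hell; pose proof (ln_le_sub1 (1 + u)); lra).
   split.
   - rewrite Hsig. assert (u * (1 - u) <= u / (1 + u)).
     { apply (Rmult_le_reg_r (1 + u)); [lra|]. replace (u / (1 + u) * (1 + u)) with u by (field; lra). nra. }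
     nra.
   - assert (ln u <= ln (2 * (INR n * L))) by (apply ln_le; auto).
     rewrite ln_mult in H by nra. rewrite ln_mult in H by lra.
     unfold u in H. rewrite ln_exp in H.
     assert (ln (2 * INR n) = ln 2 + ln (INR n)) by (apply ln_mult; lra). lra. }
 split.
 - unfold Ssig. apply (Rmult_le_reg_l (INR n)); auto.
   replace (INR n * (/ INR n * fsum n (sig p d X Y th))) with (fsum n (sig p d X Y th)) by (field; lra).
   replace (INR n * (19 / 20 * L)) with (fsum n (fun s => 19/20 * ell s)) by (rewrite fsum_scal, Hsum; ring).
   apply fsum_le. intros; apply Hper; auto.
 -
   assert (HP : INR n * Pq n p d X Y th = fsum n (fun s => sig p d X Y th s * dsum (2*p) (S d) (fun i j => qq p d X Y th s i j * Wc d th i j))).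
   { rewrite (fsum_ext n _ (fun s => dsum (2*p) (S d) (fun i j => sig p d X Y th s * (qq p d X Y th s i j * Wc d th i j))))
       by (intros; rewrite dsum_scal; auto).
     rewrite fsum_dsum_swap. unfold Pq. replace (INR n * - dsum (2 * p) (S d) (fun i j => gW n p d X Y th i j * Wc d th i j)) with (- INR n * dsum (2 * p) (S d) (fun i j => gW n p d X Y th i j * Wc d th i j)) by ring.
     rewrite <- dsum_scal. apply dsum_ext. intros i j _ _.
     rewrite (fsum_ext n _ (fun s => (sig p d X Y th s * qq p d X Y th s i j) * Wc d th i j)) by (intros; ring).
     rewrite fsum_scalr. rewrite gW_q by auto. rewrite Rmult_assoc. reflexivity. }
   assert (Hq : forall s, (s < n)%nat -> Y s * network p d th (X s) - 1 <= dsum (2*p) (S d) (fun i j => qq p d X Y th s i j * Wc d th i j)).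
   { intros s Hs. unfold dsum.
     rewrite (fsum_ext (2*p) _ (fun i => Y s * out_weight p i * hder (/ INR p) (act d th (X s) i) * act d th (X s) i)).
     2:{ intros i Hi. unfold qq. set (hh := hder (/ INR p) (act d th (X s) i)). rewrite act_W. rewrite <- fsum_scal. apply fsum_ext; intros. ring. }
     rewrite network_act. rewrite <- fsum_scal.
     assert (Hone : fsum (2*p) (fun _ => / INR p / 2) = 1) by (rewrite fsum_const, mult_INR; simpl; field; lra).
     rewrite <- Hone, <- fsum_minus. apply fsum_le. intros i Hi.
     pose proof (hder_lin (/ INR p) (act d th (X s) i) ltac:(apply Rinv_0_lt_compat; lra)).
     assert (HYu : Y s * out_weight p i = 1 \/ Y s * out_weight p i = -1).
     { unfold out_weight. destruct (HY s Hs) as [-> | ->]; destruct (Nat.ltb i p); [left|right|right|left]; ring. }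
     set (hh := hder (/ INR p) (act d th (X s) i)) in *. set (ph := huber_relu (/ INR p) (act d th (X s) i)) in *.
     set (aa := act d th (X s) i) in *.
     replace (Y s * (out_weight p i * ph) - / INR p / 2) with ((Y s * out_weight p i) * ph - / INR p / 2) by ring.
     replace (Y s * out_weight p i * hh * aa) with ((Y s * out_weight p i) * (hh * aa)) by ring.
     destruct HYu as [-> | ->]; lra. }
   apply (Rmult_le_reg_l (INR n)); auto. rewrite HP.
   apply Rle_trans with (fsum n (fun s => sig p d X Y th s * (19/20 * (- ln L)))).
   + rewrite fsum_scalr. apply Rle_trans with (INR n * (19/20 * L) * (19 / 20 * - ln L)); [right; ring|].
     apply Rmult_le_compat_r; [lra|]. replace (INR n * (19/20 * L)) with (fsum n (fun s => 19/20 * ell s)) by (rewrite fsum_scal, Hsum; ring).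
     apply fsum_le. intros; apply Hper; auto.
   + apply fsum_le. intros s Hs. apply Rmult_le_compat_l; [left; apply sig_pos|].
     eapply Rle_trans; [apply (Hper s Hs)|]. exact (Hq s Hs).
Qed.

Lemma frob_update n p d X Y th th' al :
  (forall i j, (i < 2*p)%nat -> (j < S d)%nat -> Wc d th' i j = Wc d th i j - al * gW n p d X Y th i j) ->
  frob_sq p d th' = frob_sq p d th + 2 * al * Pq n p d X Y th + al * al * G2 n p d X Y th.
Proof. intros H. rewrite !frob_W. unfold Pq, G2.
 rewrite (dsum_ext _ _ (fun i j => Wc d th' i j * Wc d th' i j)
   (fun i j => (Wc d th i j * Wc d th i j + (- 2 * al) * (gW n p d X Y th i j * Wc d th i j)) + (al * al) * (gW n p d X Y th i j * gW n p d X Y th i j))).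
 - rewrite !dsum_plus, !dsum_scal. ring.
 - intros i j Hi Hj. rewrite H by auto. ring. Qed.

Lemma P_cs n p d X Y th : Pq n p d X Y th * Pq n p d X Y th <= frob_sq p d th * G2 n p d X Y th.
Proof. unfold Pq, G2. rewrite frob_W.
 pose proof (dsum_cs (2*p) (S d) (gW n p d X Y th) (Wc d th)).
 replace (- dsum (2 * p) (S d) (fun i j => gW n p d X Y th i j * Wc d th i j) *
  - dsum (2 * p) (S d) (fun i j => gW n p d X Y th i j * Wc d th i j)) with
  (dsum (2 * p) (S d) (fun i j => gW n p d X Y th i j * Wc d th i j) *
  dsum (2 * p) (S d) (fun i j => gW n p d X Y th i j * Wc d th i j)) by ring.
 lra. Qed.

Lemma arith_step L L' L1 F F' F1 G P al Q1 Q2 A pr l1 :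
  0 < L -> 0 < L' -> L <= L1 -> L * A <= L1 -> 1 <= A -> 0 < Q2 ->
  L' <= L - 3/4 * al * G ->
  50 <= - ln L ->
  0 <= G -> G <= 4 * pr * (L * L) -> 0 < pr ->
  19/20 * (19/20) * (L * (- ln L)) <= P -> P * P <= F * G ->
  F' = F + 2 * al * P + al * al * G ->
  al = Q1 * ((- ln L) * (- ln L)) -> 0 < Q1 -> pr * al * L <= 1/30 ->
  F * (l1 * l1 * (l1 * l1)) <= F1 * ((- ln L) * (- ln L) * ((- ln L) * (- ln L))) -> 0 < F1 -> 0 < l1 ->
  216 * F1 * Q2 <= 125 * Q1 * L1 * (l1 * l1 * (l1 * l1)) ->
  L' <= L1 /\ L' * (A + Q2) <= L1 /\
  F' * (l1 * l1 * (l1 * l1)) <= F1 * ((- ln L') * (- ln L') * ((- ln L') * (- ln L'))).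
Proof. intros HL HL' HL1 HA HA1 HQ2 Hdesc Hl HG HGb Hpr HP HPcs HF' Hal HQ1 Hstep Hinv HF1 Hl1 HQ2b.
 set (l := - ln L) in *. set (D := 3/4 * al * G) in *.
 assert (Hl0 : 0 < l) by lra.
 assert (Hal0 : 0 < al) by (rewrite Hal; apply Rmult_lt_0_compat; nra).
 assert (HP0 : 0 < P) by (assert (0 < L * l) by nra; nra).
 assert (HFG : 0 < F * G) by nra.
 assert (HD0 : 0 <= D) by (unfold D; nra).
 set (l4 := l1 * l1 * (l1 * l1)) in *.
 assert (Hl4 : 0 < l4) by (unfold l4; repeat apply Rmult_lt_0_compat; auto).
 set (m4 := l * l * (l * l)) in *.
 assert (Hm4 : 0 < m4) by (unfold m4; repeat apply Rmult_lt_0_compat; auto).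
 assert (HD : Q2 * (L * L) <= D * L1).
 { assert (H1 : (19/20*(19/20)) * (19/20*(19/20)) * (L * l * (L * l)) <= F * G).
   { assert (0 <= 19/20*(19/20) * (L * l)) by nra. nra. }
   assert (H2 : F * l4 * G <= F1 * m4 * G) by (apply Rmult_le_compat_r; auto).
   assert (H3 : (19/20*(19/20)) * (19/20*(19/20)) * (L * l * (L * l)) * l4 <= F1 * m4 * G).
   { apply Rle_trans with (F * G * l4); [apply Rmult_le_compat_r; lra|]. nra. }
   assert (H4 : (19/20*(19/20)) * (19/20*(19/20)) * (L * L) * l4 <= F1 * (l * l) * G).
   { assert (0 < l * l) by nra.
     apply (Rmult_le_reg_r (l * l)); auto. unfold m4 in H3. nra. }
   assert (H5 : D * L1 * 216 * F1 = 162 * Q1 * L1 * (F1 * (l * l) * G)). { unfold D. rewrite Hal. field. }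
   assert (H6 : Q2 * (L * L) * 216 * F1 <= 125 * Q1 * L1 * l4 * (L * L)).
   { replace (Q2 * (L * L) * 216 * F1) with ((216 * F1 * Q2) * (L * L)) by ring. apply Rmult_le_compat_r; [nra|auto]. }
   assert (H7 : 125 * Q1 * L1 * l4 * (L * L) <= 162 * Q1 * L1 * (F1 * (l * l) * G)).
   { assert (0 < Q1 * L1) by nra.
     assert (125 * (l4 * (L * L)) <= 162 * (F1 * (l * l) * G)) by nra. nra. }
   assert (0 < 216 * F1) by lra.
   apply (Rmult_le_reg_r (216 * F1)); auto. nra. }
 assert (HLD : 0 < L - D) by lra.
 assert (HQL : Q2 * L < L1).
 { assert (Q2 * L * L < L1 * L) by nra. nra. }
 split; [lra|]. split.
 - apply Rle_trans with ((L - D) * (A + Q2)); [apply Rmult_le_compat_r; lra|].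
   assert (L1 * ((L - D) * (A + Q2)) <= L1 * L1); [|nra].
   assert (L1 * D * (A + Q2) >= Q2 * (L * L) * (A + Q2)) by nra.
   assert (0 <= (L1 - L * A)) by lra.
   assert (L * Q2 * (L1 - L * A) <= L1 * (L1 - L * A)) by nra.
   nra.
 -
   assert (Hl' : l + D / L <= - ln L').
   { assert (ln L' <= ln (L - D)) by (apply ln_le; lra).
     assert (ln (L - D) = ln L + ln (1 - D / L)) by (rewrite <- ln_mult by (try lra; assert (D / L < 1) by (apply Rmult_lt_reg_r with L; auto; field_simplify; lra); lra); f_equal; field; lra).
     assert (ln (1 - D / L) <= - (D / L)).
     { assert (0 < 1 - D / L) by (assert (D / L < 1) by (apply Rmult_lt_reg_r with L; auto; field_simplify; lra); lra).
       pose proof (ln_le_sub1 _ H1). lra. }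
     unfold l. lra. }
   set (l' := - ln L') in *.
   set (e := D / L) in *.
   assert (He : 0 <= e) by (unfold e; apply Rmult_le_pos; [lra| left; apply Rinv_0_lt_compat; lra]).
   assert (Hl'4 : m4 + 4 * (l * l * l) * e <= l' * l' * (l' * l')).
   { assert (E : l' = l + (l' - l)) by ring. rewrite E. set (s := l' - l). assert (Hs : e <= s) by (unfold s; lra).
     clearbody s. assert (0 <= l * l * l) by (repeat apply Rmult_le_pos; lra).
     assert (l * l * l * e <= l * l * l * s) by (apply Rmult_le_compat_l; lra).
     assert (0 <= s * s * (6 * l * l + 4 * l * s + s * s)) by (apply Rmult_le_pos; [apply Rle_0_sqr|]; assert (0 <= s) by lra; assert (0 <= l * s) by (apply Rmult_le_pos; lra); pose proof (Rle_0_sqr l); pose proof (Rle_0_sqr s); unfold Rsqr in *; lra).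
     unfold m4. nra. }
   assert (Hmain : F' * m4 <= F * (m4 + 4 * (l * l * l) * e)).
   { rewrite HF'.
     (* need (2 al P + al^2 G) l <= 4 F e = 3 F al G / L *)
     assert (HeL : e * L = D) by (unfold e; field; lra).
     assert (Hk : (2 * P + al * G) * (l * L) <= 3 * (F * G)).
     { assert (Ha : 2 * P * (l * L) <= 2 * (F * G) / (19/20*(19/20))).
       { assert (l * L <= P / (19/20*(19/20))) by (apply (Rmult_le_reg_l (19/20*(19/20))); [lra|]; field_simplify; nra).
         assert (2 * P * (l * L) <= 2 * P * (P / (19/20*(19/20)))) by (apply Rmult_le_compat_l; lra).
         assert (2 * P * (P / (19/20*(19/20))) <= 2 * (F * G) / (19/20*(19/20))).
         { lra. }
         lra. }
       assert (HF4 : (19/20*(19/20)) * (19/20*(19/20)) * (l * l) <= 4 * pr * F).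
       { assert (H1 : (19/20*(19/20)) * (19/20*(19/20)) * (L * l * (L * l)) <= F * G).
         { assert (0 <= 19/20*(19/20) * (L * l)) by nra. nra. }
         assert (F * G <= F * (4 * pr * (L * L))).
         { apply Rmult_le_compat_l; auto. assert (0 <= F) by (destruct (Rle_or_lt 0 F); auto; nra). auto. }
         assert (0 < L * L) by nra.
         apply (Rmult_le_reg_r (L * L)); auto. nra. }
       assert (Hb : al * G * (l * L) <= 78/100 * (F * G)).
       { replace (al * G * (l * L)) with ((pr * al * L) * (G * l) / pr) by (field; lra).
         apply Rle_trans with ((1/30) * (G * l) / pr).
         { unfold Rdiv. apply Rmult_le_compat_r; [left; apply Rinv_0_lt_compat; auto|]. apply Rmult_le_compat_r; nra. }
         apply (Rmult_le_reg_r pr); auto. field_simplify; [|lra].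
         assert (G * l <= 30 * (78/100) * (F * G) * pr); [|lra].
         assert (l <= 30 * (78/100) * F * pr); [|nra].
         nra. }
       assert (2 * (F * G) / (19/20*(19/20)) <= 222/100 * (F * G)) by (unfold Rdiv; nra).
       nra. }
     assert (Hexp : F + 2 * al * P + al * al * G = F + al * (2 * P + al * G)) by ring.
     rewrite Hexp.
     assert (Hlhs : al * (2 * P + al * G) * m4 <= F * (4 * (l * l * l) * e)).
     { assert (E1 : F * (4 * (l * l * l) * e) * L = 3 * al * (l * l * l) * (F * G)) by (replace (F * (4 * (l * l * l) * e) * L) with (4 * F * (l * l * l) * (e * L)) by ring; rewrite HeL; unfold D; field).
       assert (E2 : al * (2 * P + al * G) * m4 * L = al * (l * l * l) * ((2 * P + al * G) * (l * L))) by (unfold m4; ring).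
       apply (Rmult_le_reg_r L); auto. rewrite E1, E2.
       assert (0 < al * (l * l * l)) by (apply Rmult_lt_0_compat; nra).
       nra. }
     nra. }
   assert (F' * l4 * m4 <= F1 * (l' * l' * (l' * l')) * m4); [|apply (Rmult_le_reg_r m4); auto].
   apply Rle_trans with (F * (m4 + 4 * (l * l * l) * e) * l4).
   { replace (F' * l4 * m4) with (F' * m4 * l4) by ring. apply Rmult_le_compat_r; lra. }
   apply Rle_trans with (F1 * m4 * (m4 + 4 * (l * l * l) * e)).
   { replace (F * (m4 + 4 * (l * l * l) * e) * l4) with (F * l4 * (m4 + 4 * (l * l * l) * e)) by ring.
     apply Rmult_le_compat_r; [|auto]. assert (0 <= l * l * l) by (repeat apply Rmult_le_pos; lra).
     assert (0 <= l * l * l * e) by (apply Rmult_le_pos; lra). lra. }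
   replace (F1 * (l' * l' * (l' * l')) * m4) with (F1 * m4 * (l' * l' * (l' * l'))) by ring.
   apply Rmult_le_compat_l; [apply Rmult_le_pos; lra|auto].
Qed.

Lemma ln_1_div x : 0 < x -> ln (1 / x) = - ln x.
Proof. intros Hx. unfold Rdiv. rewrite Rmult_1_l. apply ln_Rinv; auto. Qed.

Lemma frob_nonneg p d th : 0 <= frob_sq p d th.
Proof. rewrite frob_W. apply dsum_nonneg; intros; apply Rle_0_sqr. Qed.

Lemma step_size p Q1 Lx : (1 <= p)%nat -> 0 < Lx -> 0 <= - ln Lx -> 0 < Q1 -> Q1 <= exp 2 / (120 * INR p) ->
  INR p * (Q1 * ((- ln Lx) * (- ln Lx))) * Lx <= 1/30.
Proof. intros Hp HL Hl0 HQ HQb. assert (Hp' : 0 < INR p) by (apply INR_p_pos; auto).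
 set (l := - ln Lx) in *.
 assert (HLx : Lx = / exp l) by (unfold l; rewrite exp_Ropp, exp_ln by auto; field; lra).
 assert (H1 : l * l * Lx <= 4 / exp 2).
 { rewrite HLx. pose proof (exp_ineq1_le (l / 2 - 1)).
   assert (Hsq : exp (l / 2 - 1) * exp (l / 2 - 1) * exp 2 = exp l) by (rewrite <- !exp_plus; f_equal; field).
   pose proof (exp_pos (l / 2 - 1)). pose proof (exp_pos 2). pose proof (exp_pos l).
   set (E := exp (l / 2 - 1)) in *. set (e2 := exp 2) in *. rewrite <- Hsq.
   assert (0 < E * E * e2) by (repeat apply Rmult_lt_0_compat; auto).
   apply (Rmult_le_reg_r (E * E * e2)); auto.
   replace (l * l * / (E * E * e2) * (E * E * e2)) with (l * l) by (field; lra).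
   replace (4 / e2 * (E * E * e2)) with (4 * (E * E)) by (field; lra).
   assert (0 <= l / 2 <= E) by lra. nra. }
 assert (INR p * Q1 <= exp 2 / 120).
 { apply (Rmult_le_compat_l (INR p)) in HQb; [|lra]. replace (INR p * (exp 2 / (120 * INR p))) with (exp 2 / 120) in HQb by (field; lra). lra. }
 replace (INR p * (Q1 * (l * l)) * Lx) with ((INR p * Q1) * (l * l * Lx)) by ring.
 pose proof (exp_pos 2).
 apply Rle_trans with ((exp 2 / 120) * (4 / exp 2)).
 - apply Rmult_le_compat; try lra.
   + apply Rmult_le_pos; lra.
   + apply Rmult_le_pos; [apply Rmult_le_pos; lra|lra].
 - right. field. lra. Qed.

Lemma update_W n p d X Y th th' al : (1 <= p)%nat ->
  (forall i j, (i < 2 * p)%nat -> (j < d)%nat -> pv th' i j = pv th i j - al * grad_v (loss n p d X Y) th i j) ->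
  (forall i, (i < 2 * p)%nat -> pb th' i = pb th i - al * grad_b (loss n p d X Y) th i) ->
  forall i j, (i < 2*p)%nat -> (j < S d)%nat -> Wc d th' i j = Wc d th i j - al * gW n p d X Y th i j.
Proof. intros Hp Hv Hb i j Hi Hj. unfold Wc. destruct (Nat.ltb_spec j d).
 - rewrite Hv by auto. rewrite grad_v_eq by auto. auto.
 - assert (j = d) by lia. subst. rewrite Hb by auto. rewrite grad_b_eq by auto. auto. Qed.

Theorem theorem1 :
  exists C1 : R, 0 < C1 /\
  forall (n p d : nat) (X : nat -> nat -> R) (Y : nat -> R)
         (theta : nat -> params) (Q1 Q2 : R),
    (2 <= n)%nat -> (1 <= p)%nat -> (1 <= d)%nat ->
    (forall s, (s < n)%nat -> fsum d (fun j => X s j ^ 2) = 1) ->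
    (forall s, (s < n)%nat -> Y s = 1 \/ Y s = -1) ->
    let L := loss n p d X Y in
    let L1 := L (theta 1%nat) in
    let V2 := frob_sq p d (theta 1%nat) in
    let Q1t := Rmin (Rmin (1 / (30 * INR p * L1 * (ln (1 / L1)) ^ 2))
                          (108 * V2 / (125 * L1 * (ln (1 / L1)) ^ 4)))
                    (exp 2 / (120 * INR p)) in
    let Q2t := 125 * Q1 * L1 * (ln (1 / L1)) ^ 4 / (216 * V2) in
    0 < Q1 -> Q1 <= Q1t ->
    0 < Q2 -> Q2 <= Q2t ->
    (forall t, (1 <= t)%nat ->
       let alpha := Q1 * (ln (1 / L (theta t))) ^ 2 in
       (forall i j, (i < 2 * p)%nat -> (j < d)%nat ->
          pv (theta (S t)) i j = pv (theta t) i j - alpha * grad_v L (theta t) i j) /\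
       (forall i, (i < 2 * p)%nat ->
          pb (theta (S t)) i = pb (theta t) i - alpha * grad_b L (theta t) i)) ->
    L1 <= 1 / Rpower (INR n) (1 + C1) ->
    forall t, (1 <= t)%nat ->
      L (theta t) <= L1 / (Q2 * INR (t - 1) + 1).
Proof.
 exists 100. split; [lra|].
 intros n p d X Y theta Q1 Q2 Hn Hp Hd HX HY L L1 V2 Q1t Q2t HQ1 HQ1t HQ2 HQ2t Hgd Hsmall.
 assert (Hn1 : (1 <= n)%nat) by lia.
 assert (HnR : 2 <= INR n) by (apply (le_INR 2); auto).
 assert (Hp' : 0 < INR p) by (apply INR_p_pos; auto).
 set (lnn := ln (INR n)).
 assert (Hlnn : 1/2 < lnn).
 { pose proof ln_lt_2. assert (ln 2 <= lnn); [|lra]. unfold lnn. apply ln_le; lra. }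
 assert (Hln2 : ln 2 <= lnn) by (unfold lnn; apply ln_le; lra).
 assert (HLpos : forall k, 0 < L (theta k)) by (intros; apply loss_pos; auto).
 assert (HL1pos : 0 < L1) by apply HLpos.
 assert (H101 : 101 * lnn <= - ln L1).
 { unfold Rpower in Hsmall. replace ((1 + 100) * ln (INR n)) with (101 * lnn) in Hsmall by (unfold lnn; ring).
   assert (ln L1 <= ln (1 / exp (101 * lnn))) by (apply ln_le; auto).
   rewrite ln_1_div, ln_exp in H by apply exp_pos. lra. }
 assert (Hcond : forall Lx, 0 < Lx -> Lx <= L1 ->
   INR n * Lx <= 1/40 /\ ln (2 * INR n) + 1 <= 1/20 * (- ln Lx) /\ 50 <= - ln Lx).
 { intros Lx HLx HLxL. assert (ln Lx <= ln L1) by (apply ln_le; auto).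
   assert (ln (2 * INR n) = ln 2 + lnn) by (unfold lnn; apply ln_mult; lra).
   split; [|split; lra].
   assert (ln (INR n * Lx) <= - (50)) by (rewrite ln_mult by lra; fold lnn; lra).
   rewrite <- (exp_ln (INR n * Lx)) by nra.
   apply Rle_trans with (exp (- (50))); [destruct H1; [left; apply exp_increasing; auto| right; f_equal; auto]|].
   rewrite exp_Ropp. pose proof (exp_ineq1_le 50). apply (Rmult_le_reg_r (exp 50)); [apply exp_pos|].
   field_simplify; [lra|]. pose proof (exp_pos 50); lra. }
 assert (HQ1e : Q1 <= exp 2 / (120 * INR p)) by (eapply Rle_trans; [apply HQ1t|apply Rmin_r]).
 set (l1 := - ln L1).
 assert (Hl1 : 50 <= l1) by (apply (Hcond L1); lra).
 assert (Hal_eq : forall k, Q1 * ln (1 / L (theta k)) ^ 2 = Q1 * ((- ln (L (theta k))) * (- ln (L (theta k))))).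
 { intros k. rewrite ln_1_div by auto. ring. }
 assert (HV2 : 0 < V2).
 { destruct (Hcond L1 HL1pos (Rle_refl _)) as [Hc1 [Hc2 Hc3]].
   destruct (margin n p d X Y (theta 1%nat) Hn1 Hp HY Hc1 Hc2) as [_ HPm].
   pose proof (P_cs n p d X Y (theta 1%nat)). pose proof (frob_nonneg p d (theta 1%nat)).
   pose proof (G2_nonneg n p d X Y (theta 1%nat)).
   change (loss n p d X Y (theta 1%nat)) with L1 in HPm. fold l1 in HPm. fold V2 in H, H0.
   set (P1 := Pq n p d X Y (theta 1%nat)) in *.
   assert (0 < L1 * l1) by (apply Rmult_lt_0_compat; lra). assert (0 < P1) by nra.
   destruct H0 as [|E]; auto. rewrite <- E in H. nra. }
 assert (HQ2b : 216 * V2 * Q2 <= 125 * Q1 * L1 * (l1 * l1 * (l1 * l1))).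
 { unfold Q2t in HQ2t. rewrite ln_1_div in HQ2t by auto. fold l1 in HQ2t.
   apply (Rmult_le_compat_l (216 * V2)) in HQ2t; [|lra].
   replace (216 * V2 * (125 * Q1 * L1 * l1 ^ 4 / (216 * V2))) with (125 * Q1 * L1 * (l1 * l1 * (l1 * l1))) in HQ2t by (field; lra).
   lra. }
 assert (Hinv : forall k, L (theta (S k)) <= L1 /\ L (theta (S k)) * (Q2 * INR k + 1) <= L1 /\
   frob_sq p d (theta (S k)) * (l1 * l1 * (l1 * l1)) <=
   V2 * ((- ln (L (theta (S k)))) * (- ln (L (theta (S k)))) * ((- ln (L (theta (S k)))) * (- ln (L (theta (S k))))))).
 { induction k as [|k IH].
   - change (L (theta 1%nat)) with L1. change (frob_sq p d (theta 1%nat)) with V2. fold l1.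
     change (INR 0) with 0. split; [lra|]. split; [lra|]. lra.
   - destruct IH as [IH1 [IH2 IH3]].
     set (t := S k) in *.
     destruct (Hgd t ltac:(unfold t; lia)) as [Hv Hb].
     set (al := Q1 * ln (1 / L (theta t)) ^ 2) in *.
     assert (Hupd := update_W n p d X Y (theta t) (theta (S t)) al Hp Hv Hb).
     set (Lt := L (theta t)) in *.
     assert (HLt : 0 < Lt) by apply HLpos.
     destruct (Hcond Lt HLt IH1) as [Hc1 [Hc2 Hc3]].
     destruct (margin n p d X Y (theta t) Hn1 Hp HY Hc1 Hc2) as [HSm HPm].
     assert (Hale : al = Q1 * ((- ln Lt) * (- ln Lt))) by (unfold al; apply Hal_eq).
     assert (Hss : INR p * al * Lt <= 1/30) by (rewrite Hale; apply step_size; auto; lra).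
     assert (Hal0 : 0 < al) by (rewrite Hale; apply Rmult_lt_0_compat; nra).
     pose proof (descent n p d X Y (theta t) (theta (S t)) al Hn1 Hp HX HY Hupd Hal0 Hss) as Hdesc.
     pose proof (G2_bound n p d X Y (theta t) Hn1 Hp HX HY) as HGb.
     pose proof (S_le_L n p d X Y (theta t) Hn1) as HSL.
     pose proof (S_nonneg n p d X Y (theta t)) as HS0.
     assert (HGb' : G2 n p d X Y (theta t) <= 4 * INR p * (Lt * Lt)).
     { change (loss n p d X Y (theta t)) with Lt in *. eapply Rle_trans; [apply HGb|]. apply Rmult_le_compat_l; [lra|]. apply Rmult_le_compat; lra. }
     pose proof (frob_update n p d X Y (theta t) (theta (S t)) al Hupd) as HF.
     pose proof (P_cs n p d X Y (theta t)) as HPcs.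
     change (loss n p d X Y (theta t)) with Lt in *.
     change (loss n p d X Y (theta (S t))) with (L (theta (S t))) in *.
     replace (INR t) with (INR k + 1) by (unfold t; rewrite S_INR; ring).
     replace (Q2 * (INR k + 1) + 1) with ((Q2 * INR k + 1) + Q2) by ring.
     apply (arith_step Lt (L (theta (S t))) L1 (frob_sq p d (theta t)) (frob_sq p d (theta (S t))) V2
              (G2 n p d X Y (theta t)) (Pq n p d X Y (theta t)) al Q1 Q2 (Q2 * INR k + 1) (INR p) l1);
       auto; try lra.
     all: try apply HLpos; try apply G2_nonneg.
     all: assert (0 <= INR k) by apply pos_INR; nra. }
 intros t Ht. destruct t as [|k]; [lia|].
 destruct (Hinv k) as [_ [H2 _]].
 replace (S k - 1)%nat with k by lia.
 assert (0 <= INR k) by apply pos_INR.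
 apply (Rmult_le_reg_r (Q2 * INR k + 1)); [nra|].
 replace (L1 / (Q2 * INR k + 1) * (Q2 * INR k + 1)) with L1 by (field; nra). auto.
Qed.
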